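(* For every partition $\lambda$ of $n$, the $\operatorname{GZ}_n$-module $1_\lambda=\operatorname{GZ}_n/I_\lambda$ is free of rank one as an $R$-module, generated by the image of $1$, and $L_i$ acts on it by multiplication by $r_\lambda(i)$.
   Context: $R$ is the localization of $\mathbb Z$ at a prime $(p)$. Jucys–Murphy elements $L_1=0$, $L_k=\sum_{j<k}(j,k)$; $\operatorname{GZ}_n$ is the $R$-subalgebra of $RS_n$ generated by $L_1,\dots,L_n$. Content $r_t(k)=j-i$ if $k$ is in node $[i,j]$ of the tableau $t$; $t^\lambda$ is the $\lambda$-tableau with $1,\dots,n$ entered in order along rows, $r_\lambda(i):=r_{t^\lambda}(i)$. $I_\lambda$ is the ideal of $\operatorname{GZ}_n$ generated by $L_i-r_\lambda(i)$, $i=1,\dots,n$. *)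

(* Defs.v *)
From HB Require Import structures.
From mathcomp Require Import all_boot all_order all_algebra all_fingroup.
Set Implicit Arguments. Unset Strict Implicit. Unset Printing Implicit Defensive.
Import Order.TTheory GRing.Theory Num.Theory.
Local Open Scope ring_scope.

(* R = Z_(p), realised as the subring of rat of fractions whose reduced
   denominator is prime to p. *)
Definition inR (p : nat) (q : rat) : bool := ~~ (p %| `|denq q|)%N.

(* The group algebra Q S_n, as functions S_n -> Q; RS_n sits inside it. *)
Notation galg n := {ffun {perm 'I_n} -> rat}.

Definition gdelta n (s : {perm 'I_n}) : galg n := [ffun t => (t == s)%:R].
Definition gone n : galg n := gdelta 1%g.

Definition gscale n (c : rat) (f : galg n) : galg n := [ffun s => c * f s].
(* NB: + , - , 0 on galg n are the pointwise (ffun) ones; the algebra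
   product is gmul (NOT the pointwise ffun product * ). *)

(* convolution product: gdelta s * gdelta t = gdelta (s * t)%g *)
Definition gmul n (f g : galg n) : galg n :=
  [ffun s => \sum_(t : {perm 'I_n}) f t * g (t^-1 * s)%g].

(* Jucys-Murphy elements (0-based indices): L_k = sum_{j<k} (j,k). *)
Definition JM n (k : 'I_n) : galg n :=
  \sum_(j : 'I_n | (j < k)%N) gdelta (tperm j k).

Inductive inGZ (p n : nat) : galg n -> Prop :=
| GZ_one : inGZ p (gone n)
| GZ_L (k : 'I_n) : inGZ p (JM k)
| GZ_add (x y : galg n) : inGZ p x -> inGZ p y -> inGZ p (x + y)
| GZ_mul (x y : galg n) : inGZ p x -> inGZ p y -> inGZ p (gmul x y)
| GZ_scale c (x : galg n) : inR p c -> inGZ p x -> inGZ p (gscale c x).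

Definition is_partition (n : nat) (la : seq nat) : bool :=
  [&& sorted geq la, all (fun a => 0 < a)%N la & sumn la == n].

(* (row, column), 0-based, of the entry with 0-based index k in t^lambda
   (entries filled in order along rows). *)
Fixpoint tab_pos (la : seq nat) (k : nat) : nat * nat :=
  match la with
  | [::] => (0%N, 0%N)
  | a :: la' => if (k < a)%N then (0%N, k)
                else let ij := tab_pos la' (k - a) in (ij.1.+1, ij.2)
  end.

Definition content (la : seq nat) (k : nat) : rat :=
  ((tab_pos la k).2%:Z - (tab_pos la k).1%:Z)%:~R.

Inductive inI (p n : nat) (la : seq nat) : galg n -> Prop :=
| I_gen (k : 'I_n) : inI p la (JM k - gscale (content la k) (gone n))
| I_zero : inI p la (0 : galg n)
| I_add (x y : galg n) : inI p la x -> inI p la y -> inI p la (x + y)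
| I_mull (a x : galg n) : inGZ p a -> inI p la x -> inI p la (gmul a x)
| I_mulr (a x : galg n) : inGZ p a -> inI p la x -> inI p la (gmul x a).

(* Main.v *)
Require Import Defs.
From HB Require Import structures.
From mathcomp Require Import all_boot all_order all_algebra all_fingroup.
From mathcomp Require Import ring lra zify.
Import Order.TTheory GRing.Theory Num.Theory.
Local Open Scope ring_scope.

Lemma den_dvd (q : rat) (d z : int) : q * d%:~R = z%:~R -> (denq q %| d)%Z.
Proof.
move=> H.
have E : (numq q * d)%:~R = (z * denq q)%:~R :> rat.
  by rewrite !rmorphM /= numqE -H; ring.
have E2 : numq q * d = z * denq q by apply: (intr_inj E).
have : (denq q %| numq q * d)%Z by rewrite E2 dvdz_mull.
rewrite Gauss_dvdzr //.
by rewrite coprimezE coprime_sym coprime_num_den.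
Qed.

Lemma inR_den p (a b : rat) (d : int) : prime p -> ~~ (p %| `|d|)%N ->
  a * d%:~R = b -> (denq b == 1) -> inR p a.
Proof.
move=> pp nd H /eqP db; rewrite /inR.
have : (denq a %| d)%Z.
  apply: (@den_dvd a d (numq b)); rewrite H.
  by rewrite -[b in LHS]divq_num_den db divr1.
rewrite /dvdz => Hdd; apply/negP => Hp; move: nd; by rewrite (dvdn_trans Hp Hdd).
Qed.

Lemma inRD p a b : prime p -> inR p a -> inR p b -> inR p (a + b).
Proof.
move=> pp ha hb; apply: (@inR_den p (a + b) _ (denq a * denq b)) => //.
  rewrite abszM Euclid_dvdM // negb_or; exact/andP.
have -> : (a + b) * (denq a * denq b)%:~R =
  ((numq a * denq b + numq b * denq a)%:~R).
  by rewrite rmorphD !rmorphM /= !numqE; ring.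
by rewrite denq_int.
Qed.

Lemma inRM p a b : prime p -> inR p a -> inR p b -> inR p (a * b).
Proof.
move=> pp ha hb; apply: (@inR_den p (a * b) _ (denq a * denq b)) => //.
  rewrite abszM Euclid_dvdM // negb_or; exact/andP.
have -> : (a * b) * (denq a * denq b)%:~R = ((numq a * numq b)%:~R).
  by rewrite !rmorphM /= !numqE; ring.
by rewrite denq_int.
Qed.

Lemma inR_int p (z : int) : prime p -> inR p z%:~R.
Proof.
move=> pp; rewrite /inR denq_int /=; rewrite dvdn1; apply/eqP => E.
by move: (prime_gt1 pp); rewrite E.
Qed.
Section GAlg.
Variable n : nat.
Implicit Types (f g h : galg n) (c d : rat) (s t u : {perm 'I_n}).

Lemma gmulE f g s : gmul f g s = \sum_t f t * g (t^-1 * s)%g.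
Proof. by rewrite ffunE. Qed.

Lemma gmulA f g h : gmul (gmul f g) h = gmul f (gmul g h).
Proof.
apply/ffunP => s; rewrite !gmulE.
under eq_bigr do rewrite gmulE mulr_suml.
rewrite exchange_big /=; apply: eq_bigr => u _.
rewrite gmulE mulr_sumr (reindex_inj (mulgI u)) /=.
apply: eq_bigr => w _; rewrite mulKg mulrA; congr (_ * _ * h _).
by rewrite invMg mulgA.
Qed.

Lemma gmulDl f g h : gmul (f + g) h = gmul f h + gmul g h.
Proof.
by apply/ffunP => s; rewrite !ffunE -big_split; apply: eq_bigr => t _; rewrite ffunE mulrDl.
Qed.

Lemma gmulDr f g h : gmul f (g + h) = gmul f g + gmul f h.
Proof.
by apply/ffunP => s; rewrite !ffunE -big_split; apply: eq_bigr => t _; rewrite ffunE mulrDr.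
Qed.

Lemma gmul0l g : gmul 0 g = 0.
Proof. by apply/ffunP => s; rewrite !ffunE big1 // => t _; rewrite ffunE mul0r. Qed.

Lemma gmul0r g : gmul g 0 = 0.
Proof. by apply/ffunP => s; rewrite !ffunE big1 // => t _; rewrite ffunE mulr0. Qed.

Lemma gmulNl f g : gmul (- f) g = - gmul f g.
Proof. by apply/eqP; rewrite -subr_eq0 opprK -gmulDl addNr gmul0l. Qed.

Lemma gmulNr f g : gmul f (- g) = - gmul f g.
Proof. by apply/eqP; rewrite -subr_eq0 opprK -gmulDr addNr gmul0r. Qed.

Lemma gmulBl f g h : gmul (f - g) h = gmul f h - gmul g h.
Proof. by rewrite gmulDl gmulNl. Qed.

Lemma gmulBr f g h : gmul f (g - h) = gmul f g - gmul f h.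
Proof. by rewrite gmulDr gmulNr. Qed.

Lemma gmul_suml I (r : seq I) (P : pred I) (F : I -> galg n) g :
  gmul (\sum_(i <- r | P i) F i) g = \sum_(i <- r | P i) gmul (F i) g.
Proof. by apply: (big_morph (fun f => gmul f g)) => [f h|]; [apply: gmulDl|apply: gmul0l]. Qed.

Lemma gmul_sumr I (r : seq I) (P : pred I) (F : I -> galg n) g :
  gmul g (\sum_(i <- r | P i) F i) = \sum_(i <- r | P i) gmul g (F i).
Proof. by apply: (big_morph (fun f => gmul g f)) => [f h|]; [apply: gmulDr|apply: gmul0r]. Qed.

Lemma gscale_mull c f g : gmul (gscale c f) g = gscale c (gmul f g).
Proof.
apply/ffunP => s; rewrite !ffunE mulr_sumr; apply: eq_bigr => t _.
by rewrite ffunE mulrA.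
Qed.

Lemma gscale_mulr c f g : gmul f (gscale c g) = gscale c (gmul f g).
Proof.
apply/ffunP => s; rewrite !ffunE mulr_sumr; apply: eq_bigr => t _.
by rewrite ffunE mulrCA.
Qed.

Lemma gdelta_mull s f : gmul (gdelta s) f = [ffun u => f (s^-1 * u)%g].
Proof.
apply/ffunP => u; rewrite !ffunE (bigD1 s) //= big1 ?addr0.
  by rewrite ffunE eqxx mul1r.
by move=> t /negbTE ts; rewrite ffunE ts mul0r.
Qed.

Lemma gdeltaM s t : gmul (gdelta s) (gdelta t) = gdelta (s * t)%g.
Proof.
rewrite gdelta_mull; apply/ffunP => u; rewrite !ffunE.
by congr (GRing.natmul 1 (nat_of_bool _)); apply/eqP/eqP => [<-|->]; rewrite ?mulKVg ?mulKg.
Qed.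

Lemma gone_mull f : gmul (gone n) f = f.
Proof. by rewrite /gone gdelta_mull; apply/ffunP => u; rewrite ffunE invg1 mul1g. Qed.

Lemma gone_mulr f : gmul f (gone n) = f.
Proof.
apply/ffunP => u; rewrite !ffunE (bigD1 u) //= big1 ?addr0.
  by rewrite ffunE mulVg eqxx mulr1.
move=> t tu; rewrite ffunE; case: eqP; last by rewrite mulr0.
by move=> /eqP; rewrite -eq_mulVg1 => /eqP E; rewrite E eqxx in tu.
Qed.

Lemma gscaleD c d f : gscale (c + d) f = gscale c f + gscale d f.
Proof. by apply/ffunP => s; rewrite !ffunE mulrDl. Qed.
Lemma gscaleDr c f g : gscale c (f + g) = gscale c f + gscale c g.
Proof. by apply/ffunP => s; rewrite !ffunE mulrDr. Qed.
Lemma gscaleBr c f g : gscale c (f - g) = gscale c f - gscale c g.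
Proof. by apply/ffunP => s; rewrite !ffunE mulrBr. Qed.
Lemma gscaleM c d f : gscale (c * d) f = gscale c (gscale d f).
Proof. by apply/ffunP => s; rewrite !ffunE mulrA. Qed.
Lemma gscale1 f : gscale 1 f = f.
Proof. by apply/ffunP => s; rewrite !ffunE mul1r. Qed.
Lemma gscale0r c : gscale c 0 = 0 :> galg n.
Proof. by apply/ffunP => s; rewrite !ffunE mulr0. Qed.
Lemma gscale_one c f : gscale c f = gmul (gscale c (gone n)) f.
Proof. by rewrite gscale_mull gone_mull. Qed.

End GAlg.

Section Core.
Variables (n : nat) (row col : 'I_n -> nat).
Local Notation perm := {perm 'I_n}.

Definition Pres (f : 'I_n -> nat) : {set perm} := [set s : perm | [forall b, f (s b) == f b]].
Definition Rowg := Pres row.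
Definition Colg := Pres col.
Definition sgn (s : perm) : rat := (-1) ^+ odd_perm s.
Definition sigma (A : {set perm}) : galg n := \sum_(s in A) gdelta s.
Definition xR := sigma Rowg.
Definition yC : galg n := \sum_(s in Colg) gscale (sgn s) (gdelta s).
Definition vT := gmul xR yC.

Lemma PresP f (s : perm) : reflect (forall b, f (s b) = f b) (s \in Pres f).
Proof. by rewrite inE; apply: (iffP forallP) => H b; apply/eqP. Qed.

Lemma Pres_mulV f (t u : perm) : t \in Pres f -> ((t^-1 * u)%g \in Pres f) = (u \in Pres f).
Proof.
move=> /PresP Ht; apply/PresP/PresP => H b.
  by have := H (t b); rewrite permM permK => ->; exact: Ht.
by rewrite permM H -{2}(permKV t b) Ht.
Qed.

Lemma sigma_eval A (s : perm) : sigma A s = (s \in A)%:R.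
Proof.
rewrite /sigma sum_ffunE; case: (boolP (s \in A)) => sA.
  rewrite (bigD1 s) //= big1 ?addr0; first by rewrite ffunE eqxx.
  by move=> t /andP [_ ts]; rewrite ffunE eq_sym (negbTE ts).
by rewrite big1 // => t tA; rewrite ffunE; case: eqP => // E; rewrite E tA in sA.
Qed.

Lemma yC_eval (s : perm) : yC s = (s \in Colg)%:R * sgn s.
Proof.
rewrite /yC sum_ffunE; case: (boolP (s \in Colg)) => sA.
  rewrite (bigD1 s) //= big1 ?addr0; first by rewrite !ffunE eqxx mulr1 mul1r.
  by move=> t /andP [_ ts]; rewrite !ffunE eq_sym (negbTE ts) mulr0.
rewrite big1 ?mul0r // => t tA; rewrite !ffunE; case: eqP; last by rewrite mulr0.
by move=> E; rewrite E tA in sA.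
Qed.

Lemma delta_Row (t : perm) : t \in Rowg -> gmul (gdelta t) xR = xR.
Proof.
move=> tR; rewrite gdelta_mull; apply/ffunP => u; rewrite ffunE !sigma_eval.
by rewrite Pres_mulV.
Qed.

Lemma delta_Col a m : a != m -> col a = col m -> gmul (gdelta (tperm a m)) yC = - yC.
Proof.
move=> am cam; have tC : tperm a m \in Colg.
  apply/PresP => b; case: (tpermP a m b) => [->|->|] //; by rewrite ?tpermL ?tpermR.
rewrite gdelta_mull; apply/ffunP => u; rewrite !ffunE !yC_eval Pres_mulV //.
by rewrite /sgn tpermV odd_mul_tperm am addTb; case: (u \in Colg); rewrite ?mul0r ?oppr0 // !mul1r; case: (odd_perm u); rewrite /= ?expr1 ?expr0 ?opprK.
Qed.

Hypothesis Hinj : forall a b, row a = row b -> col a = col b -> a = b.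

Lemma vT1 : vT 1%g = 1.
Proof.
rewrite /vT gmulE (bigD1 1%g) //= big1 ?addr0.
  rewrite sigma_eval yC_eval mulg1 invg1.
  have h1 : forall f, (1%g : perm) \in Pres f by move=> f; apply/PresP => b; rewrite perm1.
  by rewrite !h1 /sgn odd_perm1 !mul1r.
move=> t t1; rewrite sigma_eval yC_eval mulg1.
case: (boolP (t \in Rowg)) => tR; last by rewrite mul0r.
case: (boolP (t^-1 \in Colg))%g => tC; last by rewrite mul0r mulr0.
exfalso; move: t1; apply/negP; rewrite negbK.
suff: (t^-1 = 1)%g by move=> E; rewrite -[t]invgK E invg1.
apply/permP => b; rewrite perm1; apply: Hinj.
  by move/PresP: tR => /(_ (t^-1 b)%g); rewrite permKV.
by move/PresP: tC => ->.
Qed.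


Section RowI.
Variables (k : 'I_n) (i : nat).
Hypothesis ik : i != row k.

Definition Pp : {set 'I_n} := [set b : 'I_n | (row b != i) && (b != k)].
Definition Tset : {set perm} :=
  [set s : perm | [forall b, (b \in Pp) ==> (row (s b) == row b)]].

Lemma TsetP (s : perm) : reflect (forall b, b \in Pp -> row (s b) = row b) (s \in Tset).
Proof.
rewrite inE; apply: (iffP forallP) => H b; first by move=> bP; move: (H b); rewrite bP => /eqP.
by apply/implyP => /H ->.
Qed.

Lemma T_m (s : perm) : s \in Tset -> exists m, [/\ row m = row k, m \notin s @: Pp,
   (forall b, b \notin Pp -> row (s b) = i \/ s b = m) &
   (forall m', row m' != i -> m' \notin s @: Pp -> m' = m)].
Proof.
move=> /TsetP sT; set W := [set b : 'I_n | row b != i].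
have kW : k \in W by rewrite inE eq_sym.
have PWk : Pp = W :\ k by apply/setP => b; rewrite !inE andbC.
have sPW : s @: Pp \subset W.
  apply/subsetP => _ /imsetP [b bP ->]; rewrite inE sT //.
  by move: bP; rewrite inE => /andP [].
have c1 : #|W :\: s @: Pp| == 1%N.
  rewrite cardsDS // card_imset; last exact: perm_inj.
  rewrite PWk (cardsD1 k W) kW.
  by rewrite -addnBA // subnn addn0.
case/cards1P: c1 => m Hm.
have : m \in W :\: s @: Pp by rewrite Hm set11.
rewrite inE => /andP [nm mW].
have uniq : forall m', row m' != i -> m' \notin s @: Pp -> m' = m.
  by move=> m' h1 h2; apply/set1P; rewrite -Hm inE h2 inE h1.
exists m; split => //; last first.
- move=> b bP; case: (eqVneq (row (s b)) i) => h; [by left|right].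
  by apply: uniq => //; rewrite mem_imset //; exact: perm_inj.
move: mW; rewrite inE => mi.
apply/eqP; apply/negPn/negP => mk.
set Q := [set b : 'I_n | row b == row m].
have QP : Q \subset Pp.
  apply/subsetP => b; rewrite !inE => /eqP rb; rewrite rb mi /=.
  by apply/eqP => E; move: mk; rewrite -E rb eqxx.
have sQ : s @: Q \subset Q.
  apply/subsetP => _ /imsetP [b bQ ->]; rewrite inE sT; last exact: (subsetP QP).
  by move: bQ; rewrite inE.
have EQ : s @: Q = Q.
  by apply/eqP; rewrite eqEcard sQ (card_imset _ (@perm_inj _ s)) leqnn.
have : m \in s @: Pp.
  apply: (subsetP (imsetS _ QP)); rewrite EQ inE //.
by rewrite (negbTE nm).
Qed.

Lemma tperm_mul_eval j (u : perm) b : ((tperm j k * u)%g b) = u (tperm j k b).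
Proof. by rewrite permM. Qed.

Lemma helperT j (u : perm) : row j = i -> (tperm j k * u)%g \in Rowg -> u \in Tset.
Proof.
move=> rj /PresP H; apply/TsetP => b; rewrite inE => /andP [bi bk].
have jb : j != b by apply/eqP => E; move: bi; rewrite -E rj eqxx.
have kb : k != b by rewrite eq_sym.
by have := H b; rewrite tperm_mul_eval tpermD.
Qed.

Lemma D1 : xR + \sum_(j | row j == i) gmul (gdelta (tperm j k)) xR = sigma Tset.
Proof.
apply/ffunP => u; rewrite ffunE.
rewrite /xR sigma_eval sum_ffunE sigma_eval.
under eq_bigr do rewrite gdelta_mull ffunE sigma_eval tpermV.
case: (boolP (u \in Rowg)) => uR.
  have uT : u \in Tset by apply/TsetP => b _; move/PresP: uR.
  rewrite uT big1 ?addr0 // => j /eqP rj.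
  case: (boolP (_ \in Rowg)) => // /PresP H; exfalso.
  have := H j; rewrite tperm_mul_eval tpermL; move/PresP: uR => ->.
  by move=> E; move: ik; rewrite E rj eqxx.
case: (boolP (u \in Tset)) => uT; last first.
  rewrite big1 ?addr0 // => j /eqP rj.
  by case: (boolP (_ \in Rowg)) => // /(@helperT j u rj); rewrite (negbTE uT).
have [m [rm nm disj uniq]] := T_m _ uT.
move/TsetP: (uT) => sT.
set j0 := (u^-1)%g m.
have uj0 : u j0 = m by rewrite permKV.
have j0P : j0 \notin Pp.
  by apply/negP => h; move: nm; rewrite -uj0 mem_imset //; [rewrite h | exact: perm_inj].
have neq : forall b, b != j0 -> u b != m.
  by move=> b bj; rewrite -uj0; apply/negP => /eqP /perm_inj E; rewrite E eqxx in bj.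
have rowi : forall b, b \notin Pp -> b != j0 -> row (u b) = i.
  by move=> b bP bj; case: (disj b bP) => // E; move: (neq b bj); rewrite E eqxx.
have notP : forall b, b \notin Pp -> b != k -> row b = i.
  by move=> b; rewrite inE negb_and !negbK => /orP [/eqP // | ->].
have j0k : j0 != k.
  apply/negP => /eqP E; move: uR; apply/negP; rewrite negbK; apply/PresP => b.
  case: (boolP (b \in Pp)) => bP; first exact: sT.
  case: (eqVneq b k) => [->|bk]; first by rewrite -{1}E uj0 rm.
  by rewrite rowi // ?notP // E.
have rj0 : row j0 = i by apply: notP.
rewrite (bigD1 j0) /=; last by rewrite rj0 eqxx.
rewrite big1 ?addr0.
  suff -> : (tperm j0 k * u)%g \in Rowg by rewrite add0r.
  apply/PresP => b; rewrite tperm_mul_eval.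
  case: (tpermP j0 k b) => [->|->|bj bk].
  - rewrite rowi ?rj0 //; first by rewrite inE eqxx andbF.
    by rewrite eq_sym.
  - by rewrite uj0.
  case: (boolP (b \in Pp)) => bP; first exact: sT.
  by rewrite (rowi b bP) ?(notP b bP) //; apply/eqP.
move=> j /andP [/eqP rj jj0].
case: (boolP (_ \in Rowg)) => // /PresP H; exfalso.
have := H k; rewrite tperm_mul_eval tpermR rowi //; last first.
  by rewrite inE rj eqxx.
by move=> E; move: ik; rewrite E eqxx.
Qed.

Hypothesis Habi : forall m, row m = row k -> exists a, row a = i /\ col a = col m.

Definition mT (s : perm) : 'I_n := odflt k [pick m | (row m == row k) && (m \notin s @: Pp)].
Definition aT (m : 'I_n) : 'I_n := odflt m [pick a | (row a == i) && (col a == col m)].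
Definition tauT (s : perm) := tperm (aT (mT s)) (mT s).
Definition iotaT (s : perm) : perm := if s \in Tset then (s * tauT s)%g else s.

Lemma mT_spec s : s \in Tset -> [/\ row (mT s) = row k, mT s \notin s @: Pp &
   forall b, b \notin Pp -> row (s b) = i \/ s b = mT s].
Proof.
move=> sT; have [m [rm nm disj uniq]] := T_m _ sT.
rewrite /mT; case: pickP => [m' /andP [/eqP r' n'] | none] /=.
  have -> : m' = m by apply: uniq => //; rewrite r' eq_sym.
  by split.
by move: (none m); rewrite rm eqxx nm.
Qed.

Lemma aT_spec m : row m = row k -> row (aT m) = i /\ col (aT m) = col m.
Proof.
move=> rm; rewrite /aT; case: pickP => [a /andP [/eqP ra /eqP ca] | none] //=.
have [a [ra ca]] := Habi m rm.
by move: (none a); rewrite ra ca !eqxx.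
Qed.

Lemma iota_spec s : s \in Tset ->
  [/\ (s * tauT s)%g \in Tset, mT (s * tauT s)%g = mT s,
      aT (mT s) != mT s & col (aT (mT s)) = col (mT s)].
Proof.
move=> sT; have [rm nm disj] := mT_spec _ sT.
have [ra ca] := aT_spec _ rm.
have am : aT (mT s) != mT s by apply/eqP => E; move: ik; rewrite -rm -E ra eqxx.
have fix1 : forall b, b \in Pp -> (s * tauT s)%g b = s b.
  move=> b bP; rewrite permM /tauT tpermD //.
    apply/eqP => E; have rb : row (s b) = row b by move/TsetP: sT; apply.
    move: bP; rewrite inE => /andP [bi _].
    by move: bi; rewrite -rb -E ra eqxx.
  by apply/eqP => E; move: nm; rewrite E mem_imset //; [rewrite bP | exact: perm_inj].
have Eim : (s * tauT s)%g @: Pp = s @: Pp by apply: eq_in_imset.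
split => //.
  apply/TsetP => b bP; rewrite fix1 //; by move/TsetP: sT; apply.
by rewrite /mT Eim.
Qed.

Lemma iotaK : involutive iotaT.
Proof.
move=> s; rewrite /iotaT; case: (boolP (s \in Tset)) => sT; last by rewrite (negbTE sT).
have [sT' Em _ _] := iota_spec _ sT.
by rewrite sT' /tauT Em -mulgA tperm2 mulg1.
Qed.

Lemma D2 : gmul (sigma Tset) yC = 0.
Proof.
set S := gmul _ _.
have E : S = - S.
  rewrite /S /sigma gmul_suml.
  rewrite [LHS](reindex_inj (can_inj iotaK)) /= -sumrN.
  have memT : forall s, (iotaT s \in Tset) = (s \in Tset).
    move=> s; rewrite /iotaT; case: (boolP (s \in Tset)) => sT; last by rewrite (negbTE sT).
    by have [-> _ _ _] := iota_spec _ sT.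
  under eq_bigl => j do rewrite memT.
  apply: eq_bigr => s sT.
  have [_ _ am ca] := iota_spec _ sT.
  by rewrite /iotaT sT -gdeltaM gmulA /tauT (delta_Col _ _ am ca) gmulNr.
apply/ffunP => u; have := congr1 (fun f : galg n => f u) E.
rewrite !ffunE => h; lra.
Qed.

End RowI.

Lemma gmulMnl (f g : galg n) m : gmul (f *+ m) g = gmul f g *+ m.
Proof. by elim: m => [|m IH]; rewrite ?mulr0n ?gmul0l // !mulrS gmulDl IH. Qed.

Lemma split_rows (G : 'I_n -> galg n) r :
  \sum_(j | (row j < r)%N) G j = \sum_(i < r) \sum_(j | row j == i) G j.
Proof.
elim: r => [|r IH]; first by rewrite big_ord0 big_pred0 // => j; rewrite ltn0.
rewrite big_ord_recr /= -IH (bigID (fun j => (row j < r)%N)) /=.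
congr (_ + _); apply: eq_bigl => j; rewrite ltnS leq_eqVlt.
  by case: ltnP => h; rewrite ?orbT ?andbT // orbF andbF.
by case: ltnP => h; rewrite ?orbT ?andbF ?andbT ?orbF //; apply/esym/negbTE; rewrite neq_ltn h.
Qed.

Lemma fin_id (w : galg n) r c : - w *+ r + w *+ c = gscale (c%:R - r%:R) w.
Proof.
apply/ffunP => u. rewrite ffunE !ffunMnE !ffunE.
by rewrite -[w u *+ c]mulr_natl -[- w u *+ r]mulr_natl mulrBl mulrN addrC.
Qed.

Section Eigen.
Variable k : 'I_n.
Hypothesis Hlt : forall j : 'I_n,
  (j < k)%N = (row j < row k)%N || ((row j == row k) && (col j < col k)%N).
Hypothesis Hcnt : #|[set j : 'I_n | (row j == row k) && (col j < col k)%N]| = col k.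
Hypothesis Habove : forall i m, (i < row k)%N -> row m = row k ->
  exists a, row a = i /\ col a = col m.

Lemma JM_eigen : gmul (JM k) vT = gscale ((col k)%:R - (row k)%:R) vT.
Proof.
rewrite /vT -gmulA /JM gmul_suml.
rewrite (bigID (fun j => (row j < row k)%N)) /=.
have E1 : \sum_(j < n | (j < k)%N && (row j < row k)%N) gmul (gdelta (tperm j k)) xR
   = \sum_(j < n | (row j < row k)%N) gmul (gdelta (tperm j k)) xR.
  by apply: eq_bigl => j; rewrite Hlt; case: (boolP (row j < row k)%N) => h; rewrite ?andbT ?andbF.
have E2 : \sum_(j < n | (j < k)%N && ~~ (row j < row k)%N) gmul (gdelta (tperm j k)) xR
   = xR *+ col k.
  rewrite -Hcnt -sumr_const; apply: eq_big => j.
    rewrite Hlt inE; case: (boolP (row j < row k)%N) => h /=; last by rewrite andbT.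
    by rewrite (ltn_eqF h) andFb.
  move=> /andP [jk]; rewrite -leqNgt => h.
  have rj : row j = row k.
    by move: jk; rewrite Hlt ltnNge h /= => /andP [/eqP -> _].
  apply: delta_Row; apply/PresP => b.
  by case: (tpermP j k b) => [->|->|] //; rewrite ?rj.
rewrite E1 E2 split_rows.
rewrite (eq_bigr (fun i : 'I_(row k) => sigma (Tset k i) - xR)); last first.
  move=> i _; have ik : (i : nat) != row k by rewrite neq_ltn ltn_ord.
  by rewrite -(D1 _ _ ik) [xR + _]addrC addrK.
rewrite gmulDl gmul_suml gmulMnl.
rewrite (eq_bigr (fun _ => - gmul xR yC)); last first.
  move=> i _; have ik : (i : nat) != row k by rewrite neq_ltn ltn_ord.
  rewrite gmulBl (D2 _ _ ik) ?sub0r //.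
  by move=> m rm; apply: Habove.
rewrite sumr_const card_ord; exact: fin_id.
Qed.

End Eigen.

End Core.

Local Close Scope ring_scope.

Lemma tab_fwd la k : (k < sumn la)%N ->
  [/\ ((tab_pos la k).1 < size la)%N, ((tab_pos la k).2 < nth 0 la (tab_pos la k).1)%N
    & k = sumn (take (tab_pos la k).1 la) + (tab_pos la k).2]%N.
Proof.
elim: la k => [|a l IH] k //= hk.
case: ifP => [ka|/negbT]; first by split => //.
rewrite -leqNgt => ak.
have [h1 h2 h3] := IH (k - a)%N ltac:(lia).
split => //=; lia.
Qed.

Lemma tab_bwd la r c : (r < size la)%N -> (c < nth 0 la r)%N ->
  tab_pos la (sumn (take r la) + c) = (r, c).
Proof.
elim: la r => [|a l IH] [|r] //= hr hc; first by rewrite add0n hc.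
rewrite ifF; last lia.
by rewrite (_ : (a + sumn (take r l) + c - a = sumn (take r l) + c)%N) ?IH //; lia.
Qed.

Lemma Smono la r r' : (r < r')%N ->
  (sumn (take r la) + nth 0 la r <= sumn (take r' la))%N.
Proof.
elim: la r r' => [|a l IH] [|r] [|r'] //=; try lia.
move=> h; have := IH r r' h; lia.
Qed.

Lemma S_le_sum la r : (sumn (take r la) + nth 0 la r <= sumn la)%N.
Proof.
case: (ltnP r (size la)) => h.
  by have := @Smono la r (size la) h; rewrite take_size.
by rewrite nth_default // take_oversize // addn0.
Qed.

Local Open Scope ring_scope.

Section Tab.
Variables (n : nat) (la : seq nat).
Hypothesis sn : sumn la = n.
Hypothesis srt : sorted geq la.

Definition trow (k : 'I_n) := (tab_pos la k).1.
Definition tcol (k : 'I_n) := (tab_pos la k).2.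

Lemma tfwd (k : 'I_n) : [/\ (trow k < size la)%N, (tcol k < nth 0 la (trow k))%N
    & (k : nat) = sumn (take (trow k) la) + tcol k]%N.
Proof. by apply: tab_fwd; rewrite sn. Qed.

Lemma t_inj (a b : 'I_n) : trow a = trow b -> tcol a = tcol b -> a = b.
Proof.
move=> r c; have [_ _ ea] := tfwd a; have [_ _ eb] := tfwd b.
by apply: val_inj; rewrite /= ea eb r c.
Qed.

Lemma t_lt (j k : 'I_n) : (j < k)%N =
  (trow j < trow k)%N || ((trow j == trow k) && (tcol j < tcol k)%N).
Proof.
have [r1 c1 e1] := tfwd j; have [r2 c2 e2] := tfwd k.
case: (ltngtP (trow j) (trow k)) => h /=.
- have := Smono la _ _ h; lia.
- have := Smono la _ _ h; lia.
- by rewrite e1 e2 h ltn_add2l.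
Qed.

Lemma t_cnt (k : 'I_n) : #|[set j : 'I_n | (trow j == trow k) && (tcol j < tcol k)%N]| = tcol k.
Proof.
have [r2 c2 e2] := tfwd k.
set S := sumn (take (trow k) la).
have lt : forall c : 'I_(tcol k), (S + c < n)%N.
  move=> c; have := S_le_sum la (trow k); rewrite sn; have := ltn_ord c; lia.
pose f := fun c : 'I_(tcol k) => Ordinal (lt c).
have finj : injective f by move=> a b /(congr1 val) /= /addnI /val_inj.
rewrite -[RHS]card_ord -cardsT -(card_imset _ finj).
apply: eq_card => j; rewrite inE; apply/idP/imsetP.
  move=> /andP [/eqP rj cj]; exists (Ordinal cj); first by rewrite inE.
  by apply: val_inj => /=; have [_ _ ->] := tfwd j; rewrite rj.
move=> [c _ ->].
have tb := tab_bwd la _ _ r2 (ltn_trans (ltn_ord c) c2).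
by rewrite /trow /tcol /= tb eqxx /=.
Qed.

Lemma t_above (k : 'I_n) i (m : 'I_n) : (i < trow k)%N -> trow m = trow k ->
  exists a, trow a = i /\ tcol a = tcol m.
Proof.
move=> ik rm; have [r1 c1 e1] := tfwd m.
have isz : (i < size la)%N by apply: ltn_trans ik _; rewrite -rm.
have hs : (nth 0 la (trow m) <= nth 0 la i)%N.
  have tr : transitive geq by move=> a b c /= h1 h2; apply: leq_trans h2 h1.
  have rf : reflexive geq by move=> a /=.
  have := sorted_leq_nth tr rf 0 srt; rewrite rm => H.
  apply: (H i (trow k)) => //.
  - by rewrite unfold_in /= -rm.
  - exact: ltnW ik.
have ci : (tcol m < nth 0 la i)%N by apply: leq_trans c1 hs.
have lt : (sumn (take i la) + tcol m < n)%N.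
  have := S_le_sum la i; rewrite sn; lia.
exists (Ordinal lt).
by rewrite /trow /tcol /= tab_bwd.
Qed.

End Tab.

Lemma content_eq n la (k : 'I_n) :
  content la k = (@tcol n la k)%:R - (@trow n la k)%:R :> rat.
Proof. by rewrite /content rmorphB /=. Qed.

Theorem mainTheorem12 (p n : nat) (la : seq nat) :
  prime p -> is_partition n la ->
  (forall x, inGZ p x -> exists2 c, inR p c & inI p la (x - gscale c (gone n))) /\
  (forall c, inR p c -> inI p la (gscale c (gone n)) -> c = 0) /\
  (forall (k : 'I_n) x, inGZ p x ->
     inI p la (gmul (JM k) x - gscale (content la k) x)).
Proof.
move=> pp /and3P [srt _ /eqP sn].
have inRc : forall k : 'I_n, inR p (content la k).
  by move=> k; rewrite /content; apply: inR_int.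
have inR1 : inR p 1 by have := inR_int p 1 pp.
split; last split.
- move=> x; elim => {x}.
  + exists 1 => //; rewrite gscale1 subrr; exact: I_zero.
  + move=> k; exists (content la k) => //; exact: I_gen.
  + move=> x y _ [c hc Hx] _ [d hd Hy]; exists (c + d); first exact: inRD.
    rewrite gscaleD opprD addrACA; exact: I_add.
  + move=> x y gx [c hc Hx] gy [d hd Hy]; exists (d * c); first exact: inRM.
    have -> : gmul x y - gscale (d * c) (gone n) =
        gmul x (y - gscale d (gone n)) + gmul (gscale d (gone n)) (x - gscale c (gone n)).
      rewrite gmulBr gscale_mulr gone_mulr gmulBr !gscale_mull !gone_mull -gscaleM.
      by rewrite addrA subrK.
    apply: I_add; apply: I_mull => //; exact: GZ_scale (GZ_one _ _).
  + move=> c x hc gx [d hd Hx]; exists (c * d); first exact: inRM.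
    have -> : gscale c x - gscale (c * d) (gone n) =
        gmul (gscale c (gone n)) (x - gscale d (gone n)).
      by rewrite gmulBr !gscale_mull !gone_mull -gscaleM.
    apply: I_mull => //; exact: GZ_scale (GZ_one _ _).
- move=> c _ Hc.
  pose v := @vT n (@trow n la) (@tcol n la).
  have eig : forall k, gmul (JM k) v = gscale (content la k) v.
    move=> k; rewrite content_eq; apply: JM_eigen.
    + by move=> j; apply: t_lt.
    + exact: t_cnt.
    + by move=> i m; apply: t_above.
  have act : forall x, inGZ p x -> exists d, gmul x v = gscale d v.
    move=> x; elim => {x}.
    + by exists 1; rewrite gone_mull gscale1.
    + by move=> k; exists (content la k); apply: eig.
    + move=> x y _ [c1 H1] _ [c2 H2]; exists (c1 + c2).
      by rewrite gmulDl H1 H2 gscaleD.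
    + move=> x y _ [c1 H1] _ [c2 H2]; exists (c2 * c1).
      by rewrite gmulA H2 gscale_mulr H1 gscaleM.
    + move=> c' x _ _ [c1 H1]; exists (c' * c1).
      by rewrite gscale_mull H1 gscaleM.
  have kill : forall x, inI p la x -> gmul x v = 0.
    move=> x; elim => {x}.
    + by move=> k; rewrite gmulBl eig gscale_mull gone_mull subrr.
    + exact: gmul0l.
    + by move=> x y _ H1 _ H2; rewrite gmulDl H1 H2 addr0.
    + by move=> a x _ _ H; rewrite gmulA H gmul0r.
    + move=> a x ga _ H; have [d Hd] := act a ga.
      by rewrite gmulA Hd gscale_mulr H gscale0r.
  have h1 : v 1%g = 1 by apply: vT1; exact: t_inj.
  have E := kill _ Hc; rewrite gscale_mull gone_mull in E.
  have := congr1 (fun f : galg n => f 1%g) E; rewrite /= /gscale ffunE h1 mulr1 => ->.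
  by rewrite ffunE.
- move=> k x gx.
  have -> : gmul (JM k) x - gscale (content la k) x =
      gmul (JM k - gscale (content la k) (gone n)) x.
    by rewrite gmulBl gscale_mull gone_mull.
  apply: I_mulr => //; exact: I_gen.
Qed.
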